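(* Let $V:=\{\alpha\in\ell^\infty_w:\ G_{\tilde\psi,\psi}\alpha=\alpha\}$. Then $C_{\tilde\psi}$ maps $\mathcal H^\infty_w$ into $V$, and $C_{\tilde\psi}:(\mathcal H^\infty_w,\|\cdot\|_{\mathcal H^\infty_w})\to(V,\|\cdot\|_{\ell^\infty_w})$ is an isometric isomorphism (a linear, isometric bijection).
   Context: Standing setting. $\mathcal H$ is a separable complex Hilbert space with inner product $\langle\cdot,\cdot\rangle$, linear in the first and conjugate-linear in the second argument. $X$ is a countable index set. A weight is a map $w:X\to(0,\infty)$; $\ell^\infty_w$ is the Banach space of sequences $\alpha=(\alpha_k)_{k\in X}$ with $\|\alpha\|_{\ell^\infty_w}:=\sup_{k\in X}|\alpha_k|w(k)<\infty$. $\psi=(\psi_k)_{k\in X}$ is a frame for $\mathcal H$ and $\tilde\psi=(\tilde\psi_k)_{k\in X}$ is a dual frame, i.e. $f=\sum_{k}\langle f,\tilde\psi_k\rangle\psi_k=\sum_k\langle f,\psi_k\rangle\tilde\psi_k$ for all $f\in\mathcal H$ (unconditional convergence in $\mathcal H$). The cross Gram matrix $G_{\tilde\psi,\psi}$ has entries $(G_{\tilde\psi,\psi})_{k,l}=\langle\psi_l,\tilde\psi_k\rangle$ and acts by $(G_{\tilde\psi,\psi}\alpha)_k=\sum_{l\in X}\langle\psi_l,\tilde\psi_k\rangle\alpha_l$; it is assumed to define a bounded operator on $\ell^\infty_w$, meaning these series converge absolutely for every $\alpha\in\ell^\infty_w$ and $G_{\tilde\psi,\psi}:\ell^\infty_w\to\ell^\infty_w$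 is bounded (equivalently $\|G_{\tilde\psi,\psi}\|_{\mathcal B(\ell^\infty_w)}=\sup_{k}\sum_{l}|\langle\psi_l,\tilde\psi_k\rangle|\,w(k)/w(l)<\infty$). Let $\mathcal H^{00}:=\operatorname{span}\{\tilde\psi_k:k\in X\}$ (finite linear combinations), a dense subspace of $\mathcal H$. Equip $\mathcal H$ with the locally convex topology $\sigma(\mathcal H,\mathcal H^{00})$ generated by the seminorms $f\mapsto|\langle f,v\rangle|$, $v\in\mathcal H^{00}$ (Hausdorff and metrizable). Let $\overline{\mathcal H}$ be the completion of $\mathcal H$ in this topology, with $\mathcal H\subseteq\overline{\mathcal H}$, and for each $v\in\mathcal H^{00}$ let $f\mapsto\langle f,v\rangle_{\overline{\mathcal H},\mathcal H^{00}}$ be the unique continuous linear extension of $f\mapsto\langle f,v\rangle$ to $\overline{\mathcal H}$. Define $\mathcal H^\infty_w$ as the set of all $f\in\overline{\mathcal H}$ for which there is a sequence $(f_n)_{n\ge1}\subseteq\mathcal H$ converging to $f$ in $\sigma(\overline{\mathcal H},\mathcal H^{00})$ (i.e. $\langle f_n,v\rangle\to\langle f,v\rangle_{\overline{\mathcal H},\mathcal H^{00}}$ for all $v\in\mathcal H^{00}$) with $\sup_{n\in\mathbb N,k\in X}|\langle f_n,\tilde\psi_k\rangle|w(k)<\infty$. The coefficient operator is $C_{\tilde\psi}:\mathcal H^\infty_w\to\ell^\infty_w$, $C_{\tilde\psi}f=(\langle f,\tilde\psi_k\rangle_{\overline{\mathcal H},\mathcal H^{00}})_{k\in X}$, and the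 norm on $\mathcal H^\infty_w$ is $\|f\|_{\mathcal H^\infty_w}:=\|C_{\tilde\psi}f\|_{\ell^\infty_w}$. *)

(* Defs.v *)
From HB Require Import structures.
From mathcomp Require Import all_boot all_order all_algebra.
From mathcomp Require Import complex.
From mathcomp Require Import classical_sets reals.
Set Implicit Arguments. Unset Strict Implicit. Unset Printing Implicit Defensive.
Import Order.TTheory GRing.Theory Num.Theory.
Local Open Scope ring_scope.
Local Open Scope classical_set_scope.

Section Defs.
Variable R : realType.
Local Notation C := R[i].

Definition cabs (z : C) : R := Normc.normc z.

Definition cvgC (u : nat -> C) (l : C) : Prop :=
  forall eps : R, 0 < eps -> exists N : nat, forall n, (N <= n)%N -> cabs (u n - l) < eps.
Definition cauchyC (u : nat -> C) : Prop :=
  forall eps : R, 0 < eps -> exists N : nat, forall m n, (N <= m)%N -> (N <= n)%N ->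
    cabs (u m - u n) < eps.

Variable X : countType.

(* unconditional convergence of a complex series indexed by X:
   the net of finite partial sums converges to s *)
Definition has_sumC (a : X -> C) (s : C) : Prop :=
  forall eps : R, 0 < eps -> exists F0 : seq X, forall F : seq X,
    uniq F -> {subset F0 <= F} -> cabs (s - \sum_(k <- F) a k) < eps.

Variable H : lmodType C.
Variable ip : H -> H -> C.   (* inner product, linear in the first argument *)

Definition hnorm2 (f : H) : R := cabs (ip f f).

Definition is_inner_product : Prop :=
  [/\ forall (a : C) (f g h : H), ip (a *: f + g) h = a * ip f h + ip g h,
      forall f g : H, ip g f = conjc (ip f g),
      forall f : H, 0 <= ip f f &
      forall f : H, ip f f = 0 -> f = 0].

Definition is_separable_hilbert : Prop :=
  [/\ is_inner_product,
      (forall u : nat -> H,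
        (forall eps : R, 0 < eps -> exists N : nat, forall m n, (N <= m)%N -> (N <= n)%N ->
           hnorm2 (u m - u n) < eps) ->
        exists f : H, forall eps : R, 0 < eps -> exists N : nat, forall n, (N <= n)%N ->
           hnorm2 (u n - f) < eps) &
      exists d : nat -> H, forall (f : H) (eps : R), 0 < eps -> exists n, hnorm2 (f - d n) < eps].

Definition has_sumH (a : X -> H) (f : H) : Prop :=
  forall eps : R, 0 < eps -> exists F0 : seq X, forall F : seq X,
    uniq F -> {subset F0 <= F} -> hnorm2 (f - \sum_(k <- F) a k) < eps.

Definition is_frame (psi : X -> H) : Prop :=
  exists A B : R, [/\ 0 < A, 0 < B &
    forall f : H, exists s : R,
      has_sumC (fun k => (((cabs (ip f (psi k))) ^+ 2)%:C)%C) ((s%:C)%C) /\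
      A * hnorm2 f <= s <= B * hnorm2 f].

Definition is_dual_frame (psi psit : X -> H) : Prop :=
  [/\ is_frame psit,
      forall f : H, has_sumH (fun k => ip f (psit k) *: psi k) f &
      forall f : H, has_sumH (fun k => ip f (psi k) *: psit k) f].

Definition in_linfw (w : X -> R) (a : X -> C) : Prop :=
  exists M : R, forall k, cabs (a k) * w k <= M.
Definition linfw_norm (w : X -> R) (a : X -> C) : R :=
  sup (range (fun k => cabs (a k) * w k)).

(* the cross Gram matrix G_{psit,psi} is bounded on l^infty_w *)
Definition gram_bounded (psi psit : X -> H) (w : X -> R) : Prop :=
  exists M : R, forall (k : X) (F : seq X), uniq F ->
    \sum_(l <- F) cabs (ip (psi l) (psit k)) * w k / w l <= M.

Definition gram_fixed (psi psit : X -> H) (a : X -> C) : Prop :=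
  forall k : X, has_sumC (fun l => ip (psi l) (psit k) * a l) (a k).

Definition in_V (psi psit : X -> H) (w : X -> R) (a : X -> C) : Prop :=
  in_linfw w a /\ gram_fixed psi psit a.

Definition in_H00 (psit : X -> H) (v : H) : Prop :=
  exists (F : seq X) (c : X -> C), v = \sum_(k <- F) c k *: psit k.

(* (Hbar, iota, P) is a model of the completion of H with respect to
   sigma(H, H^00): Hbar is a complex vector space, iota : H -> Hbar the linear
   inclusion, and P g v = <g, v>_{Hbar,H00} the continuous extension of the
   pairing (only its values for v in H^00 are meaningful).  The topology of
   Hbar is the one generated by the seminorms g |-> |P g v|, v in H^00
   (metrizable), and Hbar is Hausdorff, contains H (sequentially) densely and is
   (sequentially) complete. *)
Definition is_weak_completion (psit : X -> H) (Hbar : lmodType C)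
    (iota : H -> Hbar) (P : Hbar -> H -> C) : Prop :=
  [/\ forall (a : C) (f g : H), iota (a *: f + g) = a *: iota f + iota g,
      forall (a : C) (g h : Hbar) (v : H), in_H00 psit v ->
        P (a *: g + h) v = a * P g v + P h v,
      forall (f v : H), in_H00 psit v -> P (iota f) v = ip f v,
      forall g h : Hbar, (forall v, in_H00 psit v -> P g v = P h v) -> g = h &
      ((forall g : Hbar, exists fn : nat -> H,
        forall v, in_H00 psit v -> cvgC (fun n => ip (fn n) v) (P g v)) /\
      (forall gn : nat -> Hbar, (forall v, in_H00 psit v -> cauchyC (fun n => P (gn n) v)) ->
        exists g : Hbar, forall v, in_H00 psit v -> cvgC (fun n => P (gn n) v) (P g v)))].

Definition in_Hinf (psit : X -> H) (w : X -> R) (Hbar : lmodType C)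
    (P : Hbar -> H -> C) (f : Hbar) : Prop :=
  exists fn : nat -> H,
    (forall v, in_H00 psit v -> cvgC (fun n => ip (fn n) v) (P f v)) /\
    exists M : R, forall (n : nat) (k : X), cabs (ip (fn n) (psit k)) * w k <= M.

Definition coef_op (psit : X -> H) (Hbar : lmodType C) (P : Hbar -> H -> C)
    (f : Hbar) : X -> C := fun k => P f (psit k).

Definition Hinf_norm (psit : X -> H) (w : X -> R) (Hbar : lmodType C)
    (P : Hbar -> H -> C) (f : Hbar) : R := linfw_norm w (coef_op psit P f).

End Defs.

(* Main.v *)
Require Import Defs.
From HB Require Import structures.
From mathcomp Require Import all_boot all_order all_algebra.
From mathcomp Require Import complex.
From mathcomp Require Import classical_sets reals.
From mathcomp Require Import ring lra.
Import Order.TTheory GRing.Theory Num.Theory.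
Local Open Scope ring_scope.
Set Implicit Arguments. Unset Strict Implicit.

Section Cabs.
Variable R : realType.
Local Notation C := R[i].
Lemma cabsC (z : C) : ((cabs z)%:C)%C = `|z|.
Proof. by []. Qed.
Lemma cabs_ge0 (z : C) : 0 <= cabs z.
Proof. by rewrite -ler0c cabsC. Qed.
Lemma cabsM (x y : C) : cabs (x * y) = cabs x * cabs y.
Proof. by apply: (@complexI _); rewrite rmorphM /= !cabsC normrM. Qed.
Lemma cabsD (x y : C) : cabs (x + y) <= cabs x + cabs y.
Proof. by rewrite -lecR rmorphD /= !cabsC ler_normD. Qed.
Lemma cabsN (x : C) : cabs (- x) = cabs x.
Proof. by apply: (@complexI _); rewrite !cabsC normrN. Qed.
Lemma cabs0 : cabs (0 : C) = 0.
Proof. by apply: (@complexI _); rewrite !cabsC normr0. Qed.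
Lemma cabs_conj (x : C) : cabs (conjc x) = cabs x.
Proof. by case: x => a b; rewrite /cabs /= sqrrN. Qed.
Lemma cabs_sum (I : Type) (s : seq I) (f : I -> C) :
  cabs (\sum_(i <- s) f i) <= \sum_(i <- s) cabs (f i).
Proof.
elim: s => [|x s IH]; first by rewrite !big_nil cabs0.
rewrite !big_cons; apply: le_trans (cabsD _ _) _; by rewrite lerD2l.
Qed.
Lemma cabs_realC (r : R) : 0 <= r -> cabs (r%:C)%C = r.
Proof. by move=> r0; apply: (@complexI _); rewrite cabsC ger0_norm // ler0c. Qed.
Lemma mulcJ (z : C) : z * conjc z = ((cabs z ^+ 2)%:C)%C.
Proof.
case: z => a b; rewrite /cabs /= sqr_sqrtr ?addr_ge0 ?sqr_ge0 //.
by apply/eqP; rewrite eq_complex /=; apply/andP; split; apply/eqP; ring.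
Qed.
End Cabs.
Section Cvg.
Variable R : realType.
Local Notation C := R[i].

Lemma cabsB_sym (x y : C) : cabs (x - y) = cabs (y - x).
Proof. by rewrite -cabsN opprB. Qed.

Lemma cabs_tri (x y z : C) : cabs (x - z) <= cabs (x - y) + cabs (y - z).
Proof. by have := cabsD (x - y) (y - z); rewrite addrA subrK. Qed.

Lemma cvgC_add (u v : nat -> C) l m : cvgC u l -> cvgC v m ->
  cvgC (fun n => u n + v n) (l + m).
Proof.
move=> hu hv e e0.
have e2 : 0 < e / 2 by rewrite divr_gt0.
have [N1 h1] := hu _ e2; have [N2 h2] := hv _ e2.
exists (maxn N1 N2) => n hn.
have := h1 n (leq_trans (leq_maxl _ _) hn); have := h2 n (leq_trans (leq_maxr _ _) hn).
have -> : u n + v n - (l + m) = (u n - l) + (v n - m) by ring.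
move=> a b; apply: le_lt_trans (cabsD _ _) _; lra.
Qed.

Lemma cvgC_const (c : C) : cvgC (fun _ => c) c.
Proof. by move=> e e0; exists 0%N => n _; rewrite subrr cabs0. Qed.

Lemma cvgC_scale (c : C) (u : nat -> C) l : cvgC u l -> cvgC (fun n => c * u n) (c * l).
Proof.
move=> hu e e0.
have c0 := cabs_ge0 c.
have e2 : 0 < e / (cabs c + 1) by rewrite divr_gt0 // ltr_wpDl.
have [N h] := hu _ e2; exists N => n hn.
rewrite -mulrBr cabsM.
have := h n hn; rewrite ltr_pdivlMr ?ltr_wpDl // => h'.
have := cabs_ge0 (u n - l); nra.
Qed.

Lemma cvgC_ext (u v : nat -> C) l : (forall n, u n = v n) -> cvgC u l -> cvgC v l.
Proof. by move=> e h eps eps0; have [N hN] := h _ eps0; exists N => n hn; rewrite -e; exact: hN. Qed.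

Lemma cvgC_sum (I : Type) (s : seq I) (u : I -> nat -> C) (l : I -> C) :
  (forall i, cvgC (u i) (l i)) ->
  cvgC (fun n => \sum_(i <- s) u i n) (\sum_(i <- s) l i).
Proof.
move=> hu; elim: s => [|x s IH].
  rewrite big_nil; apply: (cvgC_ext (u := fun _ => 0)); last exact: cvgC_const.
  by move=> n; rewrite big_nil.
rewrite big_cons; apply: (cvgC_ext (u := fun n => u x n + \sum_(i <- s) u i n)).
  by move=> n; rewrite big_cons.
exact: cvgC_add.
Qed.

Lemma cvgC_bound (u : nat -> C) l B : cvgC u l -> (forall n, cabs (u n) <= B) -> cabs l <= B.
Proof.
move=> hu hB; apply/ler_addgt0Pr => e e0.
have [N h] := hu _ e0.
have := h N (leqnn N); rewrite cabsB_sym => h1.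
have := cabs_tri l (u N) 0; rewrite !subr0 => h2.
have := hB N; lra.
Qed.

Lemma cvgC_unique (u : nat -> C) l m : cvgC u l -> cvgC u m -> l = m.
Proof.
move=> hl hm; apply/eqP; rewrite -subr_eq0; apply/eqP; apply: (@Normc.eq0_normc R).
apply/eqP; rewrite eq_le cabs_ge0 andbT; apply/ler_addgt0Pr => e e0.
have e2 : 0 < e / 2 by rewrite divr_gt0.
have [N1 h1] := hl _ e2; have [N2 h2] := hm _ e2.
set n := maxn N1 N2.
have a := h1 n (leq_maxl _ _); have b := h2 n (leq_maxr _ _).
rewrite cabsB_sym in a; have := cabs_tri l (u n) m.
rewrite add0r; change (Normc.normc (l - m)) with (cabs (l - m)); lra.
Qed.

Lemma cvgC_cauchy (u : nat -> C) l : cvgC u l -> cauchyC u.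
Proof.
move=> hu e e0.
have e2 : 0 < e / 2 by rewrite divr_gt0.
have [N h] := hu _ e2; exists N => m n hm hn.
have := h m hm; have := h n hn; rewrite (cabsB_sym (u n)) => a b.
have := cabs_tri (u m) l (u n); lra.
Qed.
End Cvg.

Section IP.
Variable R : realType.
Local Notation C := R[i].
Variable H : lmodType C.
Variable ip : H -> H -> C.
Hypothesis IPax : is_inner_product ip.

Lemma ipDZl (a : C) f g h : ip (a *: f + g) h = a * ip f h + ip g h.
Proof. by case: IPax. Qed.
Lemma ip_conj f g : ip g f = conjc (ip f g).
Proof. by case: IPax. Qed.
Lemma ip0l h : ip 0 h = 0.
Proof.
have := ipDZl 1 0 0 h; rewrite scaler0 addr0 mul1r => /eqP.
by rewrite -subr_eq subrr eq_sym => /eqP.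
Qed.
Lemma ipZl (a : C) f h : ip (a *: f) h = a * ip f h.
Proof. by rewrite -[a *: f]addr0 ipDZl ip0l addr0. Qed.
Lemma ipDl f g h : ip (f + g) h = ip f h + ip g h.
Proof. by rewrite -[f]scale1r ipDZl mul1r scale1r. Qed.
Lemma ipNl f h : ip (- f) h = - ip f h.
Proof. by rewrite -scaleN1r ipZl mulN1r. Qed.
Lemma ipBl f g h : ip (f - g) h = ip f h - ip g h.
Proof. by rewrite ipDl ipNl. Qed.
Lemma ip_suml (I : Type) (s : seq I) (F : I -> H) h :
  ip (\sum_(i <- s) F i) h = \sum_(i <- s) ip (F i) h.
Proof.
elim: s => [|x s IH]; first by rewrite !big_nil ip0l.
by rewrite !big_cons ipDl IH.
Qed.
Lemma conjcM (x y : C) : conjc (x * y) = conjc x * conjc y.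
Proof. exact: rmorphM. Qed.
Lemma ipZr (a : C) f h : ip h (a *: f) = conjc a * ip h f.
Proof. by rewrite ip_conj ipZl rmorphM /= -ip_conj. Qed.
Lemma ipDr f g h : ip h (f + g) = ip h f + ip h g.
Proof. by rewrite ip_conj ipDl rmorphD /= -!ip_conj. Qed.
Lemma ipBr f g h : ip h (f - g) = ip h f - ip h g.
Proof. by rewrite ip_conj ipBl rmorphB /= -!ip_conj. Qed.
Lemma ip_sumr (I : Type) (s : seq I) (F : I -> H) h :
  ip h (\sum_(i <- s) F i) = \sum_(i <- s) ip h (F i).
Proof. by rewrite ip_conj ip_suml rmorph_sum /=; apply: eq_bigr => i _; rewrite -ip_conj. Qed.
Lemma ip_self f : ip f f = ((hnorm2 ip f)%:C)%C.
Proof.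
case: IPax => _ _ pos _.
by rewrite /hnorm2 cabsC ger0_norm.
Qed.
Lemma hnorm2_ge0 f : 0 <= hnorm2 ip f.
Proof. exact: cabs_ge0. Qed.

Lemma ip_CS h v : cabs (ip h v) ^+ 2 <= (1 + hnorm2 ip v) * hnorm2 ip h.
Proof.
set z := ip h v; set c := hnorm2 ip v; set hh := hnorm2 ip h.
have c0 : 0 <= c by exact: hnorm2_ge0.
have hh0 : 0 <= hh by exact: hnorm2_ge0.
set q := cabs z ^+ 2.
have q0 : 0 <= q by rewrite /q sqr_ge0.
set s := (1 + c)^-1.
have s0 : 0 < s by rewrite invr_gt0 ltr_wpDr.
have sc1 : s * (1 + c) = 1 by rewrite mulVf // gt_eqF // ltr_wpDr.
have sc : s * c = 1 - s by rewrite -sc1; ring.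
set a := ((s%:C)%C * z).
set y := h - a *: v.
case: IPax => _ _ pos _.
have E : ip y y = ((hh - 2 * s * q + s ^+ 2 * q * c)%:C)%C.
  rewrite /y ipBl !ipBr !ipZl !ipZr -/z (ip_conj h v) -/z !ip_self -/c -/hh.
  rewrite /a conjcM conjc_real.
  have -> : ((hh - 2 * s * q + s ^+ 2 * q * c)%:C)%C =
     (hh%:C - 2%:R * s%:C * (z * conjc z) + s%:C ^+ 2 * (z * conjc z) * c%:C)%C.
    by rewrite mulcJ -/q !(rmorphB, rmorphD, rmorphM, rmorphXn, rmorph_nat).
  ring.
have := pos y; rewrite E ler0c => h1.
have h2 : s * q * c = q - s * q by rewrite -mulrA (mulrC q) mulrA sc; ring.
have h3 : 0 <= s * q by rewrite mulr_ge0 // ltW.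
nra.
Qed.

Lemma ip_cont v eps : 0 < eps -> exists2 d, 0 < d &
  forall h, hnorm2 ip h < d -> cabs (ip h v) < eps.
Proof.
move=> e0; have c0 := hnorm2_ge0 v.
exists (eps ^+ 2 / (1 + hnorm2 ip v)).
  by rewrite divr_gt0 ?exprn_gt0 // ltr_wpDr.
move=> h hd; have := ip_CS h v.
rewrite ltr_pdivlMr ?ltr_wpDr // in hd.
move=> hcs.
have hlt : cabs (ip h v) ^+ 2 < eps ^+ 2.
  apply: le_lt_trans hcs _; rewrite mulrC; exact: hd.
rewrite -(ltr_pXn2r (n := 2)) // ?nnegrE ?cabs_ge0 ?ltW //.
Qed.
End IP.

Section Sums.
Variable R : realType.
Local Notation C := R[i].
Variable X : countType.

Lemma tail_small (t : X -> R) S : (forall l, 0 <= t l) ->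
  (forall F, uniq F -> \sum_(l <- F) t l <= S) -> forall d, 0 < d ->
  exists F0 : seq X, forall G, uniq G -> (forall l, l \in G -> l \notin F0) ->
     \sum_(l <- G) t l < d.
Proof.
move=> t0 tS d d0.
pose E := [set x : R | exists F, uniq F /\ x = \sum_(l <- F) t l]%classic.
have hE : has_sup E.
  split; first by exists 0, [::]; rewrite big_nil.
  by exists S => x [F [uF ->]]; exact: tS.
have [x [F0 [uF0 ->]] hx] := sup_adherent d0 hE.
exists F0 => G uG hG.
have hc : E (\sum_(l <- F0 ++ G) t l).
  exists (F0 ++ G); split => //; rewrite cat_uniq uF0 uG andbT.
  by apply/hasPn => l /hG.
have := sup_upper_bound hE hc; rewrite big_cat /=; lra.
Qed.

Lemma DC (t : X -> R) S K (d : nat -> X -> C) (e : X -> C) (sk : nat -> C) s :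
  (forall l, 0 <= t l) -> (forall F, uniq F -> \sum_(l <- F) t l <= S) ->
  (forall n l, cabs (d n l) <= K * t l) ->
  (forall l, cvgC (fun n => d n l) (e l)) ->
  (forall n, has_sumC (d n) (sk n)) -> cvgC sk s -> has_sumC e s.
Proof.
move=> t0 tS Kb de dsum cs eps e0.
set del := eps / 4.
have del0 : 0 < del by rewrite divr_gt0.
set K' := `|K| + 1.
have K'0 : 0 < K' by rewrite ltr_wpDl.
have [F0 hF0] := tail_small t0 tS (divr_gt0 del0 K'0).
have [N1 hN1] := cs _ del0.
exists F0 => F uF sF.
have [N2 hN2] := cvgC_sum F de del0.
set n := maxn N1 N2.
have h1 := hN1 n (leq_maxl _ _).
have h4 := hN2 n (leq_maxr _ _).
have [F0' hF0'] := dsum n _ del0.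
set G := undup [seq l <- F0' | l \notin F].
have uF' : uniq (F ++ G).
  rewrite cat_uniq uF undup_uniq andbT; apply/hasPn => l.
  by rewrite mem_undup mem_filter => /andP[].
have sF' : {subset F0' <= F ++ G}.
  move=> l lF; rewrite mem_cat; case: (boolP (l \in F)) => //= lnF.
  by rewrite mem_undup mem_filter lnF.
have h2 := hF0' _ uF' sF'.
rewrite big_cat /= in h2.
have h3 : cabs (\sum_(l <- G) d n l) < del.
  apply: le_lt_trans (cabs_sum _ _) _.
  apply: (@le_lt_trans _ _ (K' * \sum_(l <- G) t l)).
    rewrite mulr_sumr; apply: ler_sum => l _; apply: le_trans (Kb n l) _.
    by apply: ler_wpM2r => //; rewrite /K' (le_trans (ler_norm K)) // lerDl.
  have hG : forall l, l \in G -> l \notin F0.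
    move=> l; rewrite mem_undup mem_filter => /andP[lF _].
    by apply/negP => /sF; rewrite (negbTE lF).
  have := hF0 G (undup_uniq _) hG.
  by rewrite ltr_pdivlMr // mulrC.
set A := \sum_(l <- F) d n l in h2 h4 *; set B := \sum_(l <- G) d n l in h2 h3 *.
set Ee := \sum_(l <- F) e l in h4 *.
have -> : s - Ee = (- (sk n - s) + (sk n - (A + B))) + (B + (A - Ee)) by ring.
apply: le_lt_trans (cabsD _ _) _.
have := cabsD (- (sk n - s)) (sk n - (A + B)); have := cabsD B (A - Ee).
rewrite cabsN; rewrite /del in h1 h2 h3 h4; lra.
Qed.
End Sums.

Section Enum.
Variable R : realType.
Local Notation C := R[i].
Variable X : countType.
Definition enumX (n : nat) : seq X := pmap (@pickle_inv X) (iota 0 n).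
Lemma enumX_uniq n : uniq (enumX n).
Proof. exact: (pmap_uniq (@pickle_invK X) (iota_uniq 0 n)). Qed.
Lemma mem_enumX x n : (x \in enumX n) = (pickle x < n)%N.
Proof.
rewrite /enumX mem_pmap; apply/mapP/idP => [[m]|hx].
  rewrite mem_iota add0n => /andP[_ hm] E; have := @pickle_invK X m.
  by rewrite -E /= => ->.
by exists (pickle x); rewrite ?mem_iota ?add0n ?hx ?pickleK_inv.
Qed.
Lemma has_sum_enum (b : X -> C) s : has_sumC b s -> cvgC (fun n => \sum_(l <- enumX n) b l) s.
Proof.
move=> hb e e0; have [F0 hF0] := hb _ e0.
exists (\max_(x <- F0) (pickle x).+1)%N => n hn.
rewrite cabsB_sym; apply: hF0; first exact: enumX_uniq.
move=> x xF; rewrite mem_enumX; apply: leq_trans hn.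
exact: (@leq_bigmax_seq X F0 xpredT (fun x => (pickle x).+1) x xF isT).
Qed.
End Enum.

Section Main.
Variable R : realType.
Local Notation C := R[i].
Variable X : countType.
Variable H : lmodType C.
Variables (ip : H -> H -> C) (psi psit : X -> H) (w : X -> R).
Variables (Hbar : lmodType C) (iota : H -> Hbar) (P : Hbar -> H -> C).
Hypothesis IPax : is_inner_product ip.
Hypothesis expand : forall f : H, has_sumH ip (fun k => ip f (psit k) *: psi k) f.
Hypothesis wpos : forall k, 0 < w k.
Variable MG : R.
Hypothesis GB : forall (k : X) (F : seq X), uniq F ->
    \sum_(l <- F) cabs (ip (psi l) (psit k)) * w k / w l <= MG.
Hypothesis WC : is_weak_completion ip psit iota P.

Lemma H00_psit k : in_H00 psit (psit k).
Proof. by exists [:: k], (fun _ => 1); rewrite big_seq1 scale1r. Qed.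

Lemma ip_H00 (f : H) F c :
  ip f (\sum_(k <- F) c k *: psit k) = \sum_(k <- F) conjc (c k) * ip f (psit k).
Proof. rewrite (ip_sumr IPax); apply: eq_bigr => k _; exact: ipZr. Qed.

Lemma P_H00 (g : Hbar) F c :
  P g (\sum_(k <- F) c k *: psit k) = \sum_(k <- F) conjc (c k) * P g (psit k).
Proof.
case: WC => _ _ _ _ [dens _].
have [fn hfn] := dens g.
apply: (cvgC_unique (hfn _ _)); first by exists F, c.
apply: (cvgC_ext (u := fun n => \sum_(k <- F) conjc (c k) * ip (fn n) (psit k))).
  by move=> n; rewrite ip_H00.
apply: cvgC_sum => k; apply: cvgC_scale; apply: hfn; exact: H00_psit.
Qed.

Lemma expansion (f : H) k :
  has_sumC (fun l => ip (psi l) (psit k) * ip f (psit l)) (ip f (psit k)).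
Proof.
move=> eps e0.
have [del d0 hd] := ip_cont IPax (psit k) e0.
have [F0 hF0] := expand f d0.
exists F0 => F uF sF.
have := hd _ (hF0 F uF sF).
rewrite (ipBl IPax) (ip_suml IPax).
have -> : \sum_(i <- F) ip (ip f (psit i) *: psi i) (psit k) =
   \sum_(l <- F) ip (psi l) (psit k) * ip f (psit l).
  by apply: eq_bigr => l _; rewrite (ipZl IPax) mulrC.
by [].
Qed.

Lemma part1 f : in_Hinf ip psit w P f -> in_V ip psi psit w (coef_op psit P f).
Proof.
move=> [fn [hcv [M hM]]].
have hb : forall n l, cabs (ip (fn n) (psit l)) <= M / w l.
  by move=> n l; rewrite ler_pdivlMr //; exact: hM.
split.
  exists M => k; rewrite /coef_op -ler_pdivlMr //.
  apply: (cvgC_bound (hcv _ (H00_psit k))) => n; exact: hb.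
move=> k.
apply: (@DC R X (fun l => cabs (ip (psi l) (psit k)) / w l) (MG / w k) M
   (fun n l => ip (psi l) (psit k) * ip (fn n) (psit l)) _
   (fun n => ip (fn n) (psit k))).
- by move=> l; rewrite divr_ge0 ?cabs_ge0 // ltW.
- move=> F uF; rewrite ler_pdivlMr // mulr_suml.
  apply: le_trans (GB k uF); rewrite le_eqVlt; apply/orP; left; apply/eqP.
  by apply: eq_bigr => l _; rewrite mulrAC.
- move=> n l; rewrite cabsM mulrCA; apply: ler_wpM2l; first exact: cabs_ge0.
  exact: hb.
- move=> l; apply: cvgC_scale; exact: hcv _ (H00_psit l).
- move=> n; exact: expansion.
- exact: hcv _ (H00_psit k).
Qed.

Lemma part2 (a : C) (f g : Hbar) : in_Hinf ip psit w P f -> in_Hinf ip psit w P g ->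
  in_Hinf ip psit w P (a *: f + g) /\
  forall k, coef_op psit P (a *: f + g) k = a * coef_op psit P f k + coef_op psit P g k.
Proof.
case: WC => _ PL _ _ _.
move=> [fn [hf [Mf hMf]]] [gn [hg [Mg hMg]]].
split; last by move=> k; rewrite /coef_op PL //; exact: H00_psit.
exists (fun n => a *: fn n + gn n); split.
  move=> v hv; rewrite PL //.
  apply: (cvgC_ext (u := fun n => a * ip (fn n) v + ip (gn n) v)).
    by move=> n; rewrite (ipDZl IPax).
  apply: cvgC_add; last exact: hg.
  apply: cvgC_scale; exact: hf.
exists (cabs a * Mf + Mg) => n k.
rewrite (ipDZl IPax).
apply: le_trans (ler_wpM2r (ltW (wpos k)) (cabsD _ _)) _.
rewrite cabsM mulrDl -mulrA; apply: lerD; last exact: hMg.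
by apply: ler_wpM2l; [exact: cabs_ge0 | exact: hMf].
Qed.

Lemma part4 (f g : Hbar) : coef_op psit P f = coef_op psit P g -> f = g.
Proof.
case: WC => _ _ _ Psep _ => e.
apply: Psep => v [F [c ->]]; rewrite !P_H00; apply: eq_bigr => k _.
by have := congr1 (fun u => u k) e; rewrite /coef_op => ->.
Qed.

Lemma part5 (a : X -> C) : in_V ip psi psit w a ->
  exists f, in_Hinf ip psit w P f /\ coef_op psit P f = a.
Proof.
case: WC => _ _ Piota _ [_ compl].
move=> [[Ma hMa] gf].
pose fn n := \sum_(l <- enumX X n) a l *: psi l.
have ipf : forall n k, ip (fn n) (psit k) = \sum_(l <- enumX X n) ip (psi l) (psit k) * a l.
  move=> n k; rewrite /fn (ip_suml IPax); apply: eq_bigr => l _.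
  by rewrite (ipZl IPax) mulrC.
have cvk : forall k, cvgC (fun n => ip (fn n) (psit k)) (a k).
  move=> k; apply: (cvgC_ext (u := fun n => \sum_(l <- enumX X n) ip (psi l) (psit k) * a l)).
    by move=> n; rewrite ipf.
  exact: has_sum_enum.
have cvv : forall v, in_H00 psit v -> exists l, cvgC (fun n => ip (fn n) v) l.
  move=> v [F [c ->]]; exists (\sum_(k <- F) conjc (c k) * a k).
  apply: (cvgC_ext (u := fun n => \sum_(k <- F) conjc (c k) * ip (fn n) (psit k))).
    by move=> n; rewrite ip_H00.
  apply: cvgC_sum => k; exact: cvgC_scale.
have [g hg] : exists g : Hbar, forall v, in_H00 psit v ->
    cvgC (fun n => P (iota (fn n)) v) (P g v).
  apply: compl => v hv; have [l hl] := cvv v hv.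
  apply: (cvgC_cauchy (l := l)); apply: (cvgC_ext (u := fun n => ip (fn n) v)) => //.
  by move=> n; rewrite Piota.
have hg' : forall v, in_H00 psit v -> cvgC (fun n => ip (fn n) v) (P g v).
  move=> v hv; apply: (cvgC_ext (u := fun n => P (iota (fn n)) v)); last exact: hg.
  by move=> n; rewrite Piota.
exists g; split.
  exists fn; split => //.
  exists (`|Ma| * MG) => n k.
  rewrite ipf.
  apply: (@le_trans _ _ ((\sum_(l <- enumX X n) cabs (ip (psi l) (psit k)) * (`|Ma| / w l)) * w k)).
    apply: ler_wpM2r; first exact: ltW.
    apply: le_trans (cabs_sum _ _) _; apply: ler_sum => l _; rewrite cabsM.
    apply: ler_wpM2l; first exact: cabs_ge0.
    rewrite ler_pdivlMr //; apply: le_trans (hMa l) _; exact: ler_norm.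
  have -> : (\sum_(l <- enumX X n) cabs (ip (psi l) (psit k)) * (`|Ma| / w l)) * w k =
      `|Ma| * \sum_(l <- enumX X n) cabs (ip (psi l) (psit k)) * w k / w l.
    rewrite mulr_suml mulr_sumr; apply: eq_bigr => l _; rewrite !mulrA; ring.
  apply: ler_wpM2l; first exact: normr_ge0.
  exact: GB (enumX_uniq _ _).
apply: boolp.funext => k; rewrite /coef_op.
exact: (cvgC_unique (hg' _ (H00_psit k)) (cvk k)).
Qed.
End Main.

Theorem mainTheorem9 (R : realType) (X : countType) (H : lmodType R[i])
    (ip : H -> H -> R[i]) (psi psit : X -> H) (w : X -> R)
    (Hbar : lmodType R[i]) (iota : H -> Hbar) (P : Hbar -> H -> R[i]) :
  is_separable_hilbert ip ->
  is_frame ip psi ->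
  is_dual_frame ip psi psit ->
  (forall k, 0 < w k) ->
  gram_bounded ip psi psit w ->
  is_weak_completion ip psit iota P ->
  [/\ (* C_{psit} maps H^infty_w into V *)
      forall f, in_Hinf ip psit w P f -> in_V ip psi psit w (coef_op psit P f),
      (* H^infty_w is a subspace and C_{psit} is linear on it *)
      forall (a : R[i]) (f g : Hbar), in_Hinf ip psit w P f -> in_Hinf ip psit w P g ->
        in_Hinf ip psit w P (a *: f + g) /\
        forall k, coef_op psit P (a *: f + g) k = a * coef_op psit P f k + coef_op psit P g k,
      (* isometry *)
      forall f, in_Hinf ip psit w P f ->
        linfw_norm w (coef_op psit P f) = Hinf_norm psit w P f,
      (* injectivity on H^infty_w *)
      forall f g, in_Hinf ip psit w P f -> in_Hinf ip psit w P g ->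
        coef_op psit P f = coef_op psit P g -> f = g &
      (* surjectivity onto V *)
      forall a : X -> R[i], in_V ip psi psit w a ->
        exists f, in_Hinf ip psit w P f /\ coef_op psit P f = a].
Proof.
move=> HS _ DF wpos [MG GB] WC.
case: HS => IPax _ _; case: DF => _ expand _.
split.
- by move=> f; apply: (part1 IPax expand wpos GB).
- by move=> a f g; apply: (part2 IPax wpos WC).
- by [].
- by move=> f g _ _; apply: (part4 IPax WC).
- by move=> a; apply: (part5 IPax wpos GB WC).
Qed.
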